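(* Let $V$ be a finitely generated $\mathrm{FS}^{\mathrm{op}}$-module over $\mathbb Z$. Then there exists an integer $e_V\ge 1$ such that for every $n\ge0$ the torsion subgroup of $V_n$ is annihilated by $e_V$ (i.e. its exponent divides $e_V$).
   Context: $\mathrm{FS}$ is the category whose objects are the sets $[n]=\{1,\dots,n\}$, $n\ge0$, and whose morphisms are all surjective maps. An $\mathrm{FS}^{\mathrm{op}}$-module over a ring $R$ is a functor $V:\mathrm{FS}^{\mathrm{op}}\to R\text{-Mod}$, with $V_n:=V([n])$; equivalently a family of $RS_n$-modules $V_n$ with compatible maps $V_b\to V_a$ for each surjection $[a]\to[b]$. $V$ is finitely generated if there is a finite set of elements of $\bigcup_n V_n$ not contained in any proper $\mathrm{FS}^{\mathrm{op}}$-submodule of $V$. (Known fact used: over a Noetherian ring, submodules of finitely generated $\mathrm{FS}^{\mathrm{op}}$-modules are finitely generated.) *)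

(* Defs.v *)
From Stdlib Require List.
From HB Require Import structures.
From mathcomp Require Import all_boot all_order all_algebra.
Set Implicit Arguments. Unset Strict Implicit. Unset Printing Implicit Defensive.
Import GRing.Theory.
Local Open Scope ring_scope.

(* Morphisms of FS: surjections [a] -> [b], with [n] modelled as 'I_n. *)
Definition surjb (a b : nat) (f : {ffun 'I_a -> 'I_b}) : bool :=
  [forall j : 'I_b, exists i : 'I_a, f i == j].

Definition Surj (a b : nat) := {f : {ffun 'I_a -> 'I_b} | surjb f}.

Definition surj_fun (a b : nat) (f : Surj a b) : 'I_a -> 'I_b := fun i => sval f i.
Coercion surj_fun : Surj >-> Funclass.

(* An FS^op-module over Z: abelian groups V_n with additive maps
   V(f) : V_b -> V_a for each surjection f : [a] -> [b], functorially
   (contravariantly). Modules over Z are abelian groups (zmodType). *)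
Record FSopModZ := {
  FSobj : nat -> zmodType;
  FSact : forall a b : nat, Surj a b -> FSobj b -> FSobj a;
  FSact_add : forall a b (f : Surj a b) (x y : FSobj b),
      FSact f (x + y) = FSact f x + FSact f y;
  FSact_id : forall a (f : Surj a a), (forall i, f i = i) ->
      forall x : FSobj a, FSact f x = x;
  FSact_comp : forall a b c (f : Surj a b) (g : Surj b c) (h : Surj a c),
      (forall i, h i = g (f i)) ->
      forall x : FSobj c, FSact h x = FSact f (FSact g x)
}.

Definition is_submodule (V : FSopModZ) (S : forall n, FSobj V n -> Prop) : Prop :=
  (forall n, S n 0) /\
  (forall n (x y : FSobj V n), S n x -> S n y -> S n (x - y)) /\
  (forall a b (f : Surj a b) (x : FSobj V b), S b x -> S a (@FSact V a b f x)).

Definition fin_gen (V : FSopModZ) : Prop :=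
  exists gens : seq {n : nat & FSobj V n},
    forall S, @is_submodule V S ->
      (forall g, List.In g gens -> S (projT1 g) (projT2 g)) ->
      forall n (x : FSobj V n), S n x.

Definition is_torsion (G : zmodType) (x : G) : Prop :=
  exists m : nat, (0 < m)%N /\ x *+ m = 0.

(* Main.v *)
Require Import Defs.
From mathcomp Require Import all_boot all_order all_algebra.
From mathcomp Require Import zify.
From Stdlib Require Import ClassicalEpsilon Classical Lia.
From Stdlib Require List.
Set Implicit Arguments. Unset Strict Implicit. Unset Printing Implicit Defensive.

Definition pb (P : Prop) : bool := if excluded_middle_informative P then true else false.
Lemma pbP (P : Prop) : reflect P (pb P).
Proof. rewrite /pb; case: excluded_middle_informative => h; constructor => //. Qed.

Definition chooseD (T : Type) (P : T -> Prop) (d : T) : T :=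
  match excluded_middle_informative (exists x, P x) with
  | left h => proj1_sig (constructive_indefinite_description _ h)
  | right _ => d end.
Lemma chooseDP (T : Type) (P : T -> Prop) d : (exists x, P x) -> P (chooseD P d).
Proof.
rewrite /chooseD; case: excluded_middle_informative => // h _.
exact: proj2_sig (constructive_indefinite_description _ h).
Qed.

Lemma enum_inf (S : nat -> Prop) : (forall m, exists n, m <= n /\ S n) ->
  exists sg : nat -> nat, (forall t, S (sg t)) /\ (forall t, sg t < sg t.+1).
Proof.
move=> hS.
pose nx m := chooseD (fun n => m <= n /\ S n) 0.
have nxP m : m <= nx m /\ S (nx m) by exact: (chooseDP 0 (hS m)).
exists (fun t => iter t.+1 (fun x => nx x.+1) 0); split.
- move=> t /=; by case: (nxP (iter t (fun x => nx x.+1) 0).+1).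
- by move=> t /=; case: (nxP (iter t.+1 (fun x => nx x.+1) 0).+1).
Qed.

Lemma sg_mono (sg : nat -> nat) : (forall t, sg t < sg t.+1) -> forall i j, i < j -> sg i < sg j.
Proof.
move=> h i j; elim: j => // j IH; rewrite ltnS leq_eqVlt => /orP[/eqP->|/IH]; first exact: h.
move=> lt; exact: ltn_trans lt (h j).
Qed.

Lemma sg_ge (sg : nat -> nat) : (forall t, sg t < sg t.+1) -> forall t, t + sg 0 <= sg t.
Proof. move=> h; elim=> // t IH; apply: leq_ltn_trans IH (h t). Qed.

Lemma good_chain (T : Type) (R : T -> T -> Prop) :
  (forall Y : nat -> T, exists i j, i < j /\ R (Y i) (Y j)) ->
  forall X : nat -> T, exists tau : nat -> nat,
    forall s, tau s < tau s.+1 /\ R (X (tau s)) (X (tau s.+1)).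
Proof.
move=> hg X.
pose G i := exists j, i < j /\ R (X i) (X j).
have [m hm] : exists m, forall i, m <= i -> G i.
  apply: NNPP => hn.
  have hinf : forall m, exists n, m <= n /\ ~ G n.
    move=> m; apply: NNPP => hm; apply: hn; exists m => i hi; apply: NNPP => hgi.
    by apply: hm; exists i.
  have [sg [hsg1 hsg2]] := enum_inf hinf.
  have [i [j [lij hR]]] := hg (fun t => X (sg t)).
  by apply: (hsg1 i); exists (sg j); split => //; exact: sg_mono.
pose nx i := chooseD (fun j => i < j /\ R (X i) (X j)) 0.
have nxP i : m <= i -> i < nx i /\ R (X i) (X (nx i)) by move=> /hm; apply: (chooseDP 0).
pose tau t := iter t nx m.
have tm t : m <= tau t.
  elim: t => //= t IH; case: (nxP _ IH) => h _; exact: leq_trans (ltnW h).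
by exists tau => s; apply: nxP.
Qed.

Lemma pigeon (A : finType) (F : nat -> A) : exists a, forall m, exists t, m <= t /\ F t = a.
Proof.
apply: NNPP => hn.
have hb : forall a, exists m, forall t, m <= t -> F t <> a.
  move=> a; apply: NNPP => h; apply: hn; exists a => m; apply: NNPP => h2; apply: h.
  by exists m => t ht hF; apply: h2; exists t.
pose bnd a := chooseD (fun m => forall t, m <= t -> F t <> a) 0.
pose B := \max_a bnd a.
exact: (chooseDP 0 (hb (F B)) B (leq_bigmax (F:=bnd) (F B)) erefl).
Qed.

Section Higman.
Variable A : finType.

Definition badW (W : nat -> seq A) := forall i j, i < j -> ~~ subseq (W i) (W j).

Definition extP (p : seq (seq A)) :=
  exists W, badW W /\ forall i, i < size p -> W i = nth [::] p i.

Definition stepW (p : seq (seq A)) : seq A :=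
  chooseD (fun w => extP (rcons p w) /\
     forall w', extP (rcons p w') -> size w <= size w') [::].

Lemma stepWP p : extP p -> extP (rcons p (stepW p)) /\
     forall w', extP (rcons p w') -> size (stepW p) <= size w'.
Proof.
move=> hp.
suff H : exists w, extP (rcons p w) /\ forall w', extP (rcons p w') -> size w <= size w'.
  exact: (chooseDP [::] H).
have ex : exists n, exists w, size w = n /\ extP (rcons p w).
  case: hp => W [bW hW]; exists (size (W (size p))), (W (size p)); split => //.
  exists W; split => // i; rewrite size_rcons ltnS leq_eqVlt => /orP[/eqP->|hi].
    by rewrite nth_rcons ltnn eqxx.
  by rewrite nth_rcons hi; apply: hW.
have exb : exists n, pb (exists w, size w = n /\ extP (rcons p w)).
  by case: ex => n h; exists n; apply/pbP.
case: (ex_minnP exb) => n /pbP [w [sw hw]] hmin.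
exists w; split => // w' hw'; rewrite sw; apply: hmin.
by apply/pbP; exists w'.
Qed.

Fixpoint preW (t : nat) : seq (seq A) :=
  if t is t'.+1 then rcons (preW t') (stepW (preW t')) else [::].

Lemma size_preW t : size (preW t) = t.
Proof. by elim: t => //= t IH; rewrite size_rcons IH. Qed.

Definition MW t := stepW (preW t).

Lemma nth_preW t i : i < t -> nth [::] (preW t) i = MW i.
Proof.
elim: t => // t IH; rewrite ltnS leq_eqVlt => /orP[/eqP->|hi] /=;
  rewrite nth_rcons size_preW ?ltnn ?eqxx //.
by rewrite (leq_trans hi) //; apply: IH.
Qed.

Lemma Higman : forall W : nat -> seq A, exists i j, i < j /\ subseq (W i) (W j).
Proof.
move=> W0; apply: NNPP => hn.
have bW0 : badW W0.
  move=> i j hij; apply/negP => hs; apply: hn; by exists i, j.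
have ext t : extP (preW t).
  elim: t => [|t IH]; first by exists W0.
  by case: (stepWP IH).
have Mbad : badW MW.
  move=> i j hij; case: (ext j.+1) => W [bW hW].
  rewrite -(nth_preW (ltn_trans hij (ltnSn j))) -(nth_preW (ltnSn j)).
  rewrite -!hW ?size_preW //; [exact: bW| exact: ltn_trans hij _].
have minM t W : badW W -> (forall i, i < t -> W i = MW i) -> size (MW t) <= size (W t).
  move=> bW hW; case: (stepWP (ext t)) => _; apply.
  exists W; split => // i; rewrite size_rcons size_preW ltnS leq_eqVlt => /orP[/eqP->|hi].
    by rewrite nth_rcons size_preW ltnn eqxx.
  by rewrite nth_rcons size_preW hi nth_preW //; apply: hW.
have nz t : MW t != [::].
  apply/negP => /eqP h; have := Mbad t t.+1 (ltnSn t); by rewrite h sub0seq.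
have [a ha] := pigeon (fun t => ohead (MW t)).
have [sg [hs1 hs2]] := enum_inf ha.
pose i0 := sg 0.
pose W' t := if t < i0 then MW t else behead (MW (sg (t - i0))).
have subb (s : seq A) : subseq (behead s) s by case: s => //= x s; exact: subseq_cons.
have bW' : badW W'.
  move=> i j hij; rewrite /W'.
  case: ltnP => hi; case: ltnP => hj.
  - exact: Mbad.
  - apply/negP => hs.
    have hl : i < sg (j - i0).
      exact: (leq_trans hi (leq_trans (leq_addl _ _) (sg_ge hs2 (j - i0)))).
    by move: (Mbad _ _ hl); rewrite (subseq_trans hs (subb _)).
  - by move: (leq_ltn_trans hi (ltn_trans hij hj)); rewrite ltnn.
  - apply/negP => hs.
    have hlt : sg (i - i0) < sg (j - i0).
      by apply: sg_mono => //; lia.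
    have := Mbad _ _ hlt; move: hs (nz (sg (i - i0))) (hs1 (i - i0)) (hs1 (j - i0)).
    case: (MW (sg (i - i0))) => // x u; case: (MW (sg (j - i0))) => // [/= _ _ <- //|y v].
    by move=> /= hs _ <- [->]; rewrite eqxx hs.
have hag : forall i, i < i0 -> W' i = MW i by move=> i hi; rewrite /W' hi.
have := minM i0 W' bW' hag.
rewrite /W' ltnn subnn; move: (nz i0); rewrite /i0.
by case: (MW (sg 0)) => //= x u _; rewrite ltnn.
Qed.
End Higman.


Lemma subseq_idx (T : eqType) (x0 : T) (t s : seq T) : subseq s t ->
  exists io : nat -> nat,
    (forall j, j < size s -> io j < size t /\ nth x0 s j = nth x0 t (io j)) /\
    (forall j j', j < j' -> j' < size s -> io j < io j').
Proof.
elim: t s => [|y t IH] [|x s] //=.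
- by move=> _; exists id.
- by move=> _; exists id.
- case: eqP => [->|_] hs.
  + case: (IH _ hs) => io [h1 h2].
    exists (fun j => if j is j'.+1 then (io j').+1 else 0); split.
      by case=> [|j] //= hj; case: (h1 j hj) => ha hb; split.
    case=> [|j] [|j'] //= hjj hj'.
    by rewrite ltnS; apply: h2.
  + case: (IH _ hs) => io [h1 h2].
    exists (fun j => (io j).+1); split.
      by move=> j hj; case: (h1 j hj) => ha hb; split.
    by move=> j j' hjj hj'; rewrite ltnS; apply: h2.
Qed.

Lemma surjbP a b (f : {ffun 'I_a -> 'I_b}) : reflect (forall j, exists i, f i = j) (surjb f).
Proof.
apply: (iffP forallP) => h j.
  by case/existsP: (h j) => i /eqP; exists i.
by case: (h j) => i hi; apply/existsP; exists i; apply/eqP.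
Qed.

Lemma surjE a b (f : Surj a b) : forall j, exists i, f i = j.
Proof. move=> j; case: f => f hf; have /surjbP h := hf; case: (h j) => i hi; by exists i. Qed.

Lemma surj_eq a b (f g : Surj a b) : (forall i, f i = g i) -> f = g.
Proof. move=> h; apply: val_inj; apply/ffunP => i; exact: h. Qed.

Lemma comp_surjb a b c (h : Surj a b) (f : Surj b c) : surjb [ffun i => f (h i)].
Proof.
apply/surjbP => j; case: (surjE f j) => x hx; case: (surjE h x) => i hi.
by exists i; rewrite ffunE hi hx.
Qed.

Definition compS a b c (h : Surj a b) (f : Surj b c) : Surj a c :=
  exist _ [ffun i => f (h i)] (comp_surjb h f).

Lemma compSE a b c (h : Surj a b) (f : Surj b c) i : compS h f i = f (h i).
Proof. by rewrite /surj_fun /= ffunE. Qed.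

Definition ordered a b (h : Surj a b) : Prop :=
  forall j : 'I_b, exists q : 'I_a, h q = j /\ forall p : 'I_a, p < q -> h p < j.

Definition isnew n d (f : Surj n d) (p : 'I_n) : bool :=
  [forall q : 'I_n, (q < p) ==> (f q != f p)].

Lemma build_h n m d (f : Surj n d) (g : Surj m d) (io : 'I_n -> 'I_m) :
  (forall j j' : 'I_n, j < j' -> io j < io j') ->
  (forall j, f j = g (io j)) -> (forall j, isnew f j -> isnew g (io j)) ->
  exists h : Surj m n, ordered h /\ forall p, g p = f (h p).
Proof.
move=> hmono hfg hnew.
have hmono' (j j' : 'I_n) : io j <= io j' -> j <= j'.
  by move=> hle; rewrite leqNgt; apply/negP => /hmono; rewrite ltnNge hle.
pose P (p : 'I_m) (j : 'I_n) := (io j <= p) && (f j == g p).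
have exP p : exists j, P p j.
  case: (surjE f (g p)) => j0 hj0.
  have hP0 : (fun j : 'I_n => f j == g p) j0 by rewrite /= hj0.
  case: (@arg_minnP _ j0 (fun j : 'I_n => f j == g p) (fun j : 'I_n => val j) hP0) => jv /eqP hjv hmin.
  exists jv; rewrite /P hjv eqxx andbT.
  have : isnew f jv.
    apply/forallP => q; apply/implyP => hq; apply/negP => /eqP hq'.
    by have := hmin q (introT eqP (etrans hq' hjv)); rewrite leqNgt hq.
  move/hnew/forallP => hg; rewrite leqNgt; apply/negP => hlt.
  by move: (hg p); rewrite hlt /= -hfg hjv eqxx.
pose hf p := [arg max_(j > xchoose (exP p) | P p j) val j].
have hfP p : P p (hf p) /\ forall j, P p j -> j <= hf p.
  rewrite /hf; case: (@arg_maxnP _ _ (P p) (fun j : 'I_n => val j) (xchooseP (exP p))) => j hj hm.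
  by split => // j' /hm.
have hio j : hf (io j) = j.
  case: (hfP (io j)) => /andP[h1 _] h2.
  apply: val_inj; apply/eqP; rewrite eqn_leq (hmono' _ _ h1) /=.
  by apply: h2; rewrite /P leqnn hfg eqxx.
have hsurj : surjb [ffun p => hf p].
  by apply/surjbP => j; exists (io j); rewrite ffunE hio.
exists (exist _ [ffun p => hf p] hsurj); split.
- move=> j; exists (io j); rewrite /surj_fun /= ffunE hio; split => // p hp.
  rewrite ffunE; case: (hfP p) => /andP[h1 _] _.
  rewrite ltnNge; apply/negP => hle.
  have : io j <= io (hf p).
    move: hle; rewrite leq_eqVlt => /orP[/eqP e|/hmono /ltnW //].
    by rewrite (val_inj e) leqnn.
  by move=> h; move: (leq_trans h h1); rewrite leqNgt hp.
- move=> p; case: (hfP p) => /andP[_ /eqP e] _; rewrite -e; congr (f _); by rewrite /surj_fun /= ffunE.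
Qed.


Section Mons.
Variable k : nat.
Variable deg : 'I_k -> nat.

Definition Mon n := {i : 'I_k & Surj n (deg i)}.
Definition mcomp a b (x : Mon b) (h : Surj a b) : Mon a :=
  Tagged (fun i => Surj a (deg i)) (compS h (tagged x)).

Definition Alph := ('I_k + ({i : 'I_k & 'I_(deg i)} * bool))%type.
Definition letter n (x : Mon n) (p : 'I_n) : Alph :=
  inr (Tagged (fun i => 'I_(deg i)) (tagged x p), isnew (tagged x) p).
Definition word n (x : Mon n) : seq Alph := inl (tag x) :: [seq letter x p | p <- enum 'I_n].

Lemma nth_word n (x : Mon n) (p : 'I_n) d :
  nth d [seq letter x p | p <- enum 'I_n] p = letter x p.
Proof. by rewrite (nth_map p) ?size_enum_ord // nth_ord_enum. Qed.

Lemma size_word (T : Type) n (F : 'I_n -> T) : size [seq F p | p <- enum 'I_n] = n.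
Proof. by rewrite size_map size_enum_ord. Qed.

Lemma word_div n m (x : Mon n) (y : Mon m) : subseq (word x) (word y) ->
  exists h : Surj m n, ordered h /\ y = mcomp x h.
Proof.
case: x => i f; case: y => i' g; rewrite /word /=.
case: eqP => [[e]|ne] hs; last first.
  have := mem_subseq hs (mem_head _ _); case/mapP => p _ //.
subst i'.
have [io [h1 h2]] := subseq_idx (inl i) hs.
rewrite !size_word in h1 h2.
pose io' (j : 'I_n) : 'I_m := Ordinal (proj1 (h1 j (ltn_ord j))).
have hl (j : 'I_n) : letter (Tagged (fun i => Surj n (deg i)) f) j =
    letter (Tagged (fun i => Surj m (deg i)) g) (io' j).
  have := proj2 (h1 j (ltn_ord j)).
  have -> : io j = io' j by [].
  by rewrite !nth_word.
have hfg j : f j = g (io' j).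
  apply: val_inj; have := congr1 (fun u : Alph => if u is inr (t, _) then val (tagged t) else 0) (hl j).
  by [].
have hnw j : isnew f j -> isnew g (io' j).
  have := congr1 (fun u : Alph => if u is inr (_, b) then b else false) (hl j).
  by move=> /= ->.
have hmono (j j' : 'I_n) : j < j' -> io' j < io' j'.
  by move=> hjj; apply: h2.
case: (build_h hmono hfg hnw) => h [ho hg].
exists h; split => //.
rewrite /mcomp /=; congr (existT _ i _); apply: surj_eq => p.
by rewrite compSE hg.
Qed.

Definition mdiv (u v : {n : nat & Mon n}) : Prop :=
  exists h : Surj (projT1 v) (projT1 u), ordered h /\ projT2 v = mcomp (projT2 u) h.

Lemma mon_chain (X : nat -> {n : nat & Mon n}) : exists tau : nat -> nat,
  forall s, tau s < tau s.+1 /\ mdiv (X (tau s)) (X (tau s.+1)).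
Proof.
apply: good_chain => Y.
have [i [j [hij hs]]] := Higman (fun t => word (projT2 (Y t))).
by exists i, j; split => //; apply: word_div.
Qed.
End Mons.


Section Ord.
Variable k : nat.
Variable deg : 'I_k -> nat.
Notation Mon := (Mon deg).

Definition vf n (x : Mon n) (p : 'I_n) : nat := val (tagged x p).

Definition ltm n (x y : Mon n) : bool := (tag x < tag y) || ((tag x == tag y) &&
  [exists j : 'I_n, [forall p : 'I_n, (p < j) ==> (vf x p == vf y p)] && (vf x j < vf y j)]).

Lemma mon_eq n (x y : Mon n) : tag x = tag y -> (forall p, vf x p = vf y p) -> x = y.
Proof.
case: x => i f; case: y => i' g /= e; subst i' => h.
congr (existT _ i _); apply: surj_eq => p; apply: val_inj; exact: h.
Qed.

Lemma ltm_irr n (x : Mon n) : ~~ ltm x x.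
Proof.
rewrite /ltm ltnn /= eqxx /=; apply/existsP => -[j /andP[_]]; by rewrite ltnn.
Qed.

Lemma ltm_trans n (x y z : Mon n) : ltm x y -> ltm y z -> ltm x z.
Proof.
rewrite /ltm => /orP[hxy|/andP[/eqP exy /existsP[j1 /andP[/forallP h1 l1]]]]
  /orP[hyz|/andP[/eqP eyz /existsP[j2 /andP[/forallP h2 l2]]]].
- by rewrite (ltn_trans hxy hyz).
- by rewrite -eyz hxy.
- by rewrite exy hyz.
- apply/orP; right; rewrite exy eyz eqxx /=; apply/existsP.
  case: (ltngtP j1 j2) => hj.
  + exists j1; apply/andP; split.
      apply/forallP => p; apply/implyP => hp.
      move/implyP: (h1 p) => /(_ hp) /eqP ->; move/implyP: (h2 p) => /(_ (ltn_trans hp hj)) //.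
    by move/implyP: (h2 j1) => /(_ hj) /eqP <-.
  + exists j2; apply/andP; split.
      apply/forallP => p; apply/implyP => hp.
      move/implyP: (h1 p) => /(_ (ltn_trans hp hj)) /eqP ->; move/implyP: (h2 p) => /(_ hp) //.
    by move/implyP: (h1 j2) => /(_ hj) /eqP ->.
  + have e : j1 = j2 by apply: val_inj.
    subst j2; exists j1; apply/andP; split; last exact: ltn_trans l1 l2.
    apply/forallP => p; apply/implyP => hp.
    by move/implyP: (h1 p) => /(_ hp) /eqP ->; move/implyP: (h2 p) => /(_ hp).
Qed.

Lemma ltm_total n (x y : Mon n) : x != y -> ltm x y || ltm y x.
Proof.
move=> ne; rewrite /ltm; case: (ltngtP (tag x) (tag y)) => //= [_|et]; first by rewrite orbT.
have et' : tag x = tag y by apply: val_inj.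
rewrite et' eqxx /=.
have [j hj] : exists j, vf x j != vf y j.
  apply/existsP; apply: contraR ne => /existsPn h; apply/eqP; apply: mon_eq => // p.
  by apply/eqP; move: (h p); rewrite negbK.
case: (@arg_minnP _ j (fun j => vf x j != vf y j) (fun j : 'I_n => val j) hj) => j0 h0 hmin.
have hb : [forall p : 'I_n, (p < j0) ==> (vf x p == vf y p)].
  apply/forallP => p; apply/implyP => hp; apply: contraLR hp => hne.
  by rewrite -leqNgt; apply: hmin.
have hb' : [forall p : 'I_n, (p < j0) ==> (vf y p == vf x p)].
  apply/forallP => p; apply/implyP => hp; move/forallP: hb => /(_ p) /implyP /(_ hp).
  by rewrite eq_sym.
case: (ltngtP (vf x j0) (vf y j0)) => hl.
- by apply/orP; left; apply/existsP; exists j0; rewrite hb hl.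
- by apply/orP; right; apply/existsP; exists j0; rewrite hb' hl.
- by move: h0; rewrite hl eqxx.
Qed.

Lemma vf_mcomp a b (x : Mon b) (h : Surj a b) p : vf (mcomp x h) p = vf x (h p).
Proof. by rewrite /vf /mcomp /= compSE. Qed.

Lemma ltm_compat a b (h : Surj a b) (x y : Mon b) : ordered h -> ltm x y -> ltm (mcomp x h) (mcomp y h).
Proof.
move=> ho; rewrite /ltm /= => /orP[->//|/andP[-> /existsP[j /andP[/forallP h1 l1]]]].
apply/orP; right; apply/existsP; case: (ho j) => q [hq hlt].
exists q; apply/andP; split; last by rewrite !vf_mcomp hq.
apply/forallP => p; apply/implyP => hp; rewrite !vf_mcomp.
by move/implyP: (h1 (h p)); apply; rewrite hlt.
Qed.

Lemma mcomp_inj a b (h : Surj a b) (x y : Mon b) : mcomp x h = mcomp y h -> x = y.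
Proof.
move=> e; apply: mon_eq; first by have := congr1 (@tag _ _) e.
move=> p; case: (surjE h p) => q <-; by rewrite -!vf_mcomp e.
Qed.
End Ord.

Import GRing.Theory Num.Theory.
Local Open Scope ring_scope.

Section Grob.
Variable k : nat.
Variable deg : 'I_k -> nat.
Notation Mon := (Mon deg).

Definition pbcG a b (h : Surj a b) (c : {ffun Mon b -> int}) : {ffun Mon a -> int} :=
  [ffun y => \sum_(x : Mon b | mcomp x h == y) c x].

Definition zclosed n (S : {ffun Mon n -> int} -> Prop) :=
  S 0 /\ forall c c', S c -> S c' -> S (c - c').

Definition LI n (S : {ffun Mon n -> int} -> Prop) (x : Mon n) (z : int) : Prop :=
  exists c, S c /\ c x = z /\ forall y, ltm x y -> c y = 0.

Lemma max_supp n (c : {ffun Mon n -> int}) : (exists y, c y != 0) ->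
  exists x, c x != 0 /\ forall y, c y != 0 -> y != x -> ltm y x.
Proof.
case=> x0 hx0.
pose F x := #|[pred y | (c y != 0) && ltm x y]|.
case: (@arg_minnP _ x0 (fun x => c x != 0) F hx0) => x hx hmin.
exists x; split => // y hy hne.
case/orP: (ltm_total hne) => // hyx.
have : (F y < F x)%N.
  apply: proper_card; apply/properP; split.
    apply/subsetP => z; rewrite !inE => /andP[-> hz] /=; exact: ltm_trans hyx hz.
  exists y; first by rewrite inE hy hyx.
  by rewrite inE (negbTE (ltm_irr y)) andbF.
by rewrite ltnNge hmin.
Qed.

Definition mu n (c : {ffun Mon n -> int}) :=
  #|[pred y | [exists z, (c z != 0) && ((y == z) || ltm y z)]]|.

Lemma gb_eq n (S S' : {ffun Mon n -> int} -> Prop) : zclosed S -> zclosed S' ->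
  (forall c, S c -> S' c) -> (forall x z, LI S' x z -> LI S x z) -> forall c, S' c -> S c.
Proof.
move=> [S0 SB] [S'0 S'B] sub hLI c.
suff H : forall N c, (mu c < N)%N -> S' c -> S c by apply: (H (mu c).+1).
elim=> // N IH {}c hmu hc.
case: (boolP [exists y, c y != 0]) => [/existsP hne|/existsPn h0]; last first.
  have -> : c = 0 by apply/ffunP => y; rewrite ffunE; move: (h0 y); rewrite negbK => /eqP.
  exact: S0.
case: (max_supp hne) => x [hx hmax].
have habove (y : Mon n) : ltm x y -> c y = 0.
  move=> hxy; apply/eqP; apply: contraT => hy.
  have hyx := hmax y hy; have : y != x.
    by apply/negP => /eqP e; move: hxy; rewrite e (negbTE (ltm_irr x)).
  by move/hyx => hlt; move: (ltm_trans hxy hlt); rewrite (negbTE (ltm_irr x)).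
have : LI S x (c x) by apply: hLI; exists c.
case=> b [hb [hbx hbab]].
have hd : S' (c - b) by apply: S'B => //; exact: sub.
have hlt : (mu (c - b)%R < mu c)%N.
  apply: proper_card; apply/properP; split.
    apply/subsetP => y; rewrite !inE => /existsP[z /andP[hz hyz]].
    rewrite !ffunE in hz.
    case: (boolP (c z != 0)) => hcz.
      by apply/existsP; exists z; rewrite hcz hyz.
    have hbz : b z != 0 by move: hz; rewrite (eqP (negbNE hcz)) sub0r oppr_eq0.
    apply/existsP; exists x; rewrite hx /=.
    have hzx : (z == x) || ltm z x.
      case: (eqVneq z x) => [->|ne]; first by [].
      case/orP: (ltm_total ne) => [->|hxz]; first by rewrite orbT.
      by move: hbz; rewrite hbab.
    case/orP: hyz => [/eqP ->//|hyz].
    case/orP: hzx => [/eqP <-|hzx]; first by rewrite hyz orbT.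
    by rewrite (ltm_trans hyz hzx) orbT.
  exists x; first by rewrite inE; apply/existsP; exists x; rewrite hx eqxx.
  rewrite inE; apply/negP => /existsP[z /andP[hz hxz]].
  rewrite !ffunE in hz.
  case/orP: hxz => [/eqP e|hxz].
    by move: hz; rewrite -e hbx subrr eqxx.
  by move: hz; rewrite habove // hbab // subrr eqxx.
have hdS : S (c - b) by apply: IH => //; rewrite -ltnS; exact: leq_trans hlt hmu.
have -> : c = (c - b) - (0 - b) by rewrite sub0r opprK subrK.
by apply: (SB) => //; apply: (SB).
Qed.

Lemma LI_mono a b (h : Surj a b) (Sb : {ffun Mon b -> int} -> Prop)
  (Sa : {ffun Mon a -> int} -> Prop) (x : Mon b) (z : int) :
  ordered h -> (forall c, Sb c -> Sa (pbcG h c)) -> LI Sb x z -> LI Sa (mcomp x h) z.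
Proof.
move=> ho hS [c [hc [hcx hab]]].
exists (pbcG h c); split; first exact: hS.
split.
  rewrite /pbcG ffunE (eq_bigl (fun y => y == x)); first by rewrite big_pred1_eq.
  move=> y /=; apply/eqP/eqP => [/mcomp_inj //|-> //].
move=> y hy; rewrite /pbcG ffunE big1 // => x' /eqP hx'.
apply/eqP; apply: contraT => hnz.
case: (eqVneq x' x) => [e|ne].
  by move: hy; rewrite -hx' e (negbTE (ltm_irr _)).
case/orP: (ltm_total ne) => hl; last by move: hnz; rewrite hab.
have := ltm_compat ho hl; rewrite hx' => hl'.
by move: (ltm_trans hy hl'); rewrite (negbTE (ltm_irr _)).
Qed.

Lemma LI_sub n (S : {ffun Mon n -> int} -> Prop) (x : Mon n) :
  zclosed S -> LI S x 0 /\ forall z z', LI S x z -> LI S x z' -> LI S x (z - z').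
Proof.
move=> [S0 SB]; split.
  by exists 0; split => //; split => [|y _]; rewrite ffunE.
move=> z z' [c [hc [hcx hca]]] [c' [hc' [hcx' hca']]].
exists (c - c'); split; first exact: SB.
by split => [|y hy]; rewrite !ffunE ?hcx ?hcx' // hca ?hca' ?subrr.
Qed.
End Grob.


Section FSactLemmas.
Variable V : FSopModZ.
Variables (a b : nat) (f : Surj a b).

Lemma FSact0 : FSact f (0 : FSobj V b) = 0.
Proof.
have := FSact_add f (0 : FSobj V b) 0; rewrite addr0 => h.
by apply: (@addrI _ (FSact f 0)); rewrite -h addr0.
Qed.

Lemma FSactN (x : FSobj V b) : FSact f (- x) = - FSact f x.
Proof.
apply/eqP; rewrite -subr_eq0 opprK -FSact_add addNr; apply/eqP; exact: FSact0.
Qed.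

Lemma FSactB (x y : FSobj V b) : FSact f (x - y) = FSact f x - FSact f y.
Proof. by rewrite FSact_add FSactN. Qed.

Lemma FSactMn (x : FSobj V b) m : FSact f (x *+ m) = FSact f x *+ m.
Proof. elim: m => [|m IH]; first by rewrite !mulr0n FSact0. by rewrite !mulrS FSact_add IH. Qed.

Lemma FSactMz (x : FSobj V b) (z : int) : FSact f (x *~ z) = FSact f x *~ z.
Proof.
case: z => m; first by rewrite -!pmulrn FSactMn.
by rewrite NegzE !mulrNz FSactN -!pmulrn FSactMn.
Qed.

Lemma FSact_sum (I : finType) (P : pred I) (F : I -> FSobj V b) :
  FSact f (\sum_(i | P i) F i) = \sum_(i | P i) FSact f (F i).
Proof. apply: (big_morph _ (FSact_add f) FSact0). Qed.
End FSactLemmas.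

Lemma id_surjb n : surjb [ffun i : 'I_n => i].
Proof. by apply/surjbP => j; exists j; rewrite ffunE. Qed.
Definition idS n : Surj n n := exist _ [ffun i : 'I_n => i] (id_surjb n).
Lemma idSE n i : idS n i = i.
Proof. by rewrite /surj_fun /= ffunE. Qed.

Section Free.
Variable V : FSopModZ.
Variable gens : seq {n : nat & FSobj V n}.
Definition g0 : {n : nat & FSobj V n} := existT (fun n => FSobj V n) 0%N (0 : FSobj V 0%N).
Definition kk := size gens.
Definition deg (i : 'I_kk) := projT1 (nth g0 gens i).
Definition gen (i : 'I_kk) : FSobj V (deg i) := projT2 (nth g0 gens i).
Notation MonV := (Mon deg).
Definition coef n := {ffun MonV n -> int}.
Definition bas n (x : MonV n) : FSobj V n := FSact (tagged x) (gen (tag x)).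
Definition piV n (c : coef n) : FSobj V n := \sum_(x : MonV n) bas x *~ c x.
Definition pbc a b (h : Surj a b) (c : coef b) : coef a := pbcG h c.

Lemma bas_mcomp a b (h : Surj a b) (x : MonV b) : bas (mcomp x h) = FSact h (bas x).
Proof. rewrite /bas /=; apply: FSact_comp => i; exact: compSE. Qed.

Lemma pi_pbc a b (h : Surj a b) (c : coef b) : piV (pbc h c) = FSact h (piV c).
Proof.
rewrite /piV /pbc /pbcG FSact_sum.
under [RHS]eq_bigr do rewrite FSactMz -bas_mcomp.
rewrite (eq_bigr (fun y => \sum_(x0 | mcomp x0 h == y) bas y *~ c x0)); last first.
  move=> y _; rewrite ffunE. exact: mulrz_sumr.
rewrite (exchange_big_dep predT) //=.
apply: eq_bigr => x _.
rewrite (eq_bigl (fun y => y == mcomp x h)); last by move=> y; rewrite eq_sym.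
exact: (big_pred1_eq _ (mcomp x h) (fun y => bas y *~ c x)).
Qed.

Lemma piD n (c c' : coef n) : piV (c - c') = piV c - piV c'.
Proof.
rewrite /piV -sumrB; apply: eq_bigr => x _; by rewrite !ffunE mulrzBr.
Qed.

Lemma pi0 n : piV (0 : coef n) = 0.
Proof. rewrite /piV big1 // => x _; by rewrite ffunE mulr0z. Qed.

Lemma In_gens g : List.In g gens -> exists i : 'I_kk, nth g0 gens i = g.
Proof.
rewrite /kk; elim: gens => [|g' s IH] //= [->|/IH [i hi]].
  by exists ord0.
by exists (lift ord0 i).
Qed.

Lemma span (hg : forall S, is_submodule S ->
      (forall g, List.In g gens -> S (projT1 g) (projT2 g)) -> forall n x, S n x) :
  forall n (v : FSobj V n), exists c : coef n, piV c = v.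
Proof.
apply: (hg (fun n v => exists c : coef n, piV c = v)).
- split; first by move=> n; exists 0; exact: pi0.
  split; first by move=> n x y [c <-] [c' <-]; exists (c - c'); exact: piD.
  by move=> a b h x [c <-]; exists (pbc h c); exact: pi_pbc.
- move=> g /In_gens [i <-].
  pose x : MonV (deg i) := existT (fun j => Surj (deg i) (deg j)) i (idS (deg i)).
  exists [ffun y => (y == x)%:Z].
  rewrite /piV (bigD1 x) //= big1 ?addr0.
    rewrite ffunE eqxx /bas /=; rewrite FSact_id //; exact: idSE.
  by move=> y /negbTE hy; rewrite ffunE hy mulr0z.
Qed.
End Free.


Lemma int_acc (J : nat -> int -> Prop) :
  (forall s, J s 0 /\ forall z z', J s z -> J s z' -> J s (z - z')) ->
  (forall s z, J s z -> J s.+1 z) ->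
  (forall s, exists a, J s.+1 a /\ ~ J s a) -> False.
Proof.
move=> hJ hmono hstr.
have mono s s' z : (s <= s')%N -> J s z -> J s' z.
  move=> hle; elim: s' hle => [|s' IH]; first by rewrite leqn0 => /eqP->.
  rewrite leq_eqVlt => /orP[/eqP->//|]; rewrite ltnS => /IH h /h; exact: hmono.
have hN s z : J s z -> J s (- z).
  by move=> h; rewrite -sub0r; apply: (proj2 (hJ s)) => //; exact: (proj1 (hJ s)).
have hD s z z' : J s z -> J s z' -> J s (z + z').
  by move=> h h'; rewrite -[z']opprK; apply: (proj2 (hJ s)) => //; exact: hN.
case: (hstr 0%N) => b [hb1 hb0].
have bnz : b != 0 by apply/negP => /eqP hb; apply: hb0; rewrite hb; exact: (proj1 (hJ 0%N)).
have hmul s (q : int) : (1 <= s)%N -> J s (q * b).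
  move=> hs; have hb : J s b by exact: mono hs hb1.
  have hnat m : J s (m%:Z * b).
    elim: m => [|m IH]; first by rewrite mul0r; exact: (proj1 (hJ s)).
    by rewrite -addn1 PoszD mulrDl mul1r; exact: hD.
  case: q => m; first exact: hnat.
  by rewrite NegzE mulNr; apply: hN; exact: hnat.
pose B := `|b|%N.
pose cnt s := #|[pred r : 'I_B | pb (J s (nat_of_ord r)%:Z)]|.
have step s : (1 <= s)%N -> (cnt s < cnt s.+1)%N.
  move=> hs; case: (hstr s) => a [ha1 ha0].
  pose r := (a %% b)%Z.
  have r0 : 0 <= r by apply: modz_ge0.
  have rB : (`|r| < B)%N.
    by rewrite -ltz_nat gez0_abs // ltz_mod.
  have er : r = a - (a %/ b)%Z * b by apply/eqP; rewrite eq_sym subr_eq addrC -divz_eq.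
  apply: proper_card; apply/properP; split.
    apply/subsetP => x; rewrite !inE => /pbP h; apply/pbP; exact: hmono.
  exists (Ordinal rB).
    rewrite inE; apply/pbP => /=; rewrite gez0_abs // er.
    apply: (proj2 (hJ s.+1)) => //; apply: hmul; exact: leqW.
  rewrite inE; apply/negP => /pbP /=; rewrite gez0_abs // => hr.
  apply: ha0; rewrite (divz_eq a b) addrC; apply: hD => //; exact: hmul.
have low s : (s <= cnt s.+1)%N.
  elim: s => [|s IH] //; exact: (leq_ltn_trans IH (step s.+1 isT)).
have := leq_trans (low B.+1) (max_card _); rewrite card_ord ltnn //.
Qed.


Lemma fact_dvd t t' : (t <= t')%N -> (t`! %| t'`!)%N.
Proof.
elim: t' => [|t' IH]; first by rewrite leqn0 => /eqP->.
rewrite leq_eqVlt => /orP[/eqP->//|]; rewrite ltnS => /IH h.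
by rewrite factS dvdn_mull.
Qed.

Lemma LI_sub_mono k (deg : 'I_k -> nat) n (S S' : {ffun Mon deg n -> int} -> Prop) x z :
  (forall c, S c -> S' c) -> LI S x z -> LI S' x z.
Proof. by move=> h [c [hc hc']]; exists c; split => //; apply: h. Qed.

Unset Implicit Arguments.
Theorem mainTheorem8 (V : FSopModZ) (hV : fin_gen V) :
  exists e : nat, (1 <= e)%N /\
    forall (n : nat) (x : FSobj V n), is_torsion x -> x *+ e = 0.
Proof.
case: hV => gens hg.
have spn := span hg.
pose K (t : nat) n (c : coef gens n) := piV c *+ t`! = 0.
have Kz t n : zclosed (K t n).
  split; first by rewrite /K pi0 mul0rn.
  by move=> c c' h h'; rewrite /K piD mulrnBl h h' subrr.
have Kp t a b (h : Surj a b) c : K t b c -> K t a (pbcG h c).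
  by rewrite /K => hc; rewrite (pi_pbc h c) -FSactMn hc FSact0.
have Km t t' n c : (t <= t')%N -> K t n c -> K t' n c.
  rewrite /K => /fact_dvd /dvdnP [q ->] h.
  by rewrite mulnC mulrnA h mul0rn.
have [t0 ht0] : exists t0, forall t n c, K t n c -> K t0 n c.
  apply: NNPP => hn.
  pose T := (nat * ({n : nat & Mon (@deg V gens) n} * int))%type.
  pose P t0 (p : T) := (t0 < p.1)%N /\ LI (K p.1 (projT1 p.2.1)) (projT2 p.2.1) p.2.2 /\
     ~ LI (K t0 (projT1 p.2.1)) (projT2 p.2.1) p.2.2.
  have Hstep : forall t0, exists p, P t0 p.
    move=> t0; have [t [n [c [h1 h2]]]] : exists t n c, K t n c /\ ~ K t0 n c.
      apply: NNPP => h; apply: hn; exists t0 => t n c hc; apply: NNPP => h'.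
      by apply: h; exists t, n, c.
    have lt : (t0 < t)%N.
      rewrite ltnNge; apply/negP => hle; apply: h2; exact: Km hle h1.
    have [x hx] : exists x : Mon (@deg V gens) n, exists z,
        LI (K t n) x z /\ ~ LI (K t0 n) x z.
      apply: NNPP => hne; apply: h2.
      apply: (gb_eq (Kz t0 n) (Kz t n)) => //.
        by move=> c' hc'; apply: Km (ltnW lt) hc'.
      move=> x z hz; apply: NNPP => hz'; apply: hne; exists x, z; split => //.
    case: hx => z [hz1 hz2].
    by exists (t, (existT _ n x, z)).
  pose f t0 := proj1_sig (constructive_indefinite_description _ (Hstep t0)).
  have hf t0 : P t0 (f t0) := proj2_sig (constructive_indefinite_description _ (Hstep t0)).
  pose kt s := iter s (fun t => (f t).1) 0%N.
  pose X s := (f (kt s)).2.1.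
  pose z s := (f (kt s)).2.2.
  have ktS s : kt s.+1 = (f (kt s)).1 by [].
  have ktm s s' : (s <= s')%N -> (kt s <= kt s')%N.
    elim: s' => [|s' IH]; first by rewrite leqn0 => /eqP->.
    rewrite leq_eqVlt => /orP[/eqP->//|]; rewrite ltnS => /IH h.
    by rewrite ktS; case: (hf (kt s')) => hl _; exact: leq_trans h (ltnW hl).
  have hz1 s : LI (K (kt s.+1) (projT1 (X s))) (projT2 (X s)) (z s).
    by rewrite ktS; case: (hf (kt s)) => _ [].
  have hz2 s : ~ LI (K (kt s) (projT1 (X s))) (projT2 (X s)) (z s).
    by case: (hf (kt s)) => _ [].
  have [tau htau] := mon_chain X.
  pose J s w := LI (K (kt (tau s).+1) (projT1 (X (tau s)))) (projT2 (X (tau s))) w.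
  have Jstep s w : J s w -> LI (K (kt (tau s.+1)) (projT1 (X (tau s.+1)))) (projT2 (X (tau s.+1))) w.
    move=> hw; case: (htau s) => hlt [h [ho he]]; rewrite he.
    apply: (LI_mono ho (Sb := K (kt (tau s.+1)) (projT1 (X (tau s))))).
      by move=> c; apply: Kp.
    apply: LI_sub_mono hw => c; apply: Km; exact: ktm.
  apply: (int_acc (J := J)).
  - move=> s; exact: LI_sub (Kz _ _).
  - move=> s w /Jstep hw; apply: LI_sub_mono hw => c; apply: Km; exact: ktm.
  - move=> s; exists (z (tau s.+1)); split; first exact: hz1.
    by move=> /Jstep; apply: hz2.
exists t0`!; split; first exact: fact_gt0.
move=> n x [m [hm hx]].
case: (spn n x) => c hc.
have : K m n c.
  rewrite /K hc; case: m hm hx => // m _ hx.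
  by rewrite factS mulrnA hx mul0rn.
by move/ht0; rewrite /K hc.
Qed.
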